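(* Let $\alpha>0>\beta$ with $|\beta|<\alpha$, and put $\delta=\left(\frac{\alpha-\beta}{\alpha+\beta}\right)^2>1$, $K=\frac{2\alpha}{(\alpha+\beta)^2}$, $M=\delta^{\frac{1}{1-\delta}}-\delta^{\frac{\delta}{1-\delta}}$ and $T_M=\frac{\ln\delta}{K(\delta-1)}$. Let $\omega>0$, $\gamma>0$, $k_1>0$, and for $T\ge 0$, $s\in\mathbb{R}$, $y>0$ let $$\mathcal{G}_T(s,y)=\left(s-\frac{\ln y}{K}-T,\; y^{\delta}+\gamma\bigl(1+k_1\sin(2\omega s)\bigr)\right).$$ If $\gamma=M/(1+k_1)$ or $\gamma=M/(1-k_1)$, and $T=T_M$, then at every fixed point $(s,y)$ of $\mathcal{G}_T$ the derivative $D\mathcal{G}_T(s,y)$ has $1$ as a double eigenvalue and is not the identity. Moreover, these are the only situations in which $D\mathcal{G}_T(s,y)$ has a double eigenvalue $1$ at a fixed point $(s,y)$ of $\mathcal{G}_T$. *)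

(* Defs.v *)
From HB Require Import structures.
From mathcomp Require Import all_boot all_order all_algebra.
From mathcomp Require Import all_classical all_reals all_analysis.
Set Implicit Arguments. Unset Strict Implicit. Unset Printing Implicit Defensive.
Import Order.TTheory GRing.Theory Num.Theory.
Local Open Scope ring_scope.

Section Defs.
Variable R : realType.

Definition GT (delta K T gamma k1 omega : R) (s y : R) : R * R :=
  (s - ln y / K - T, y `^ delta + gamma * (1 + k1 * sin (2 * omega * s))).

Definition partial1 (f : R -> R -> R) (s y : R) : R := derive1 (fun t => f t y) s.
Definition partial2 (f : R -> R -> R) (s y : R) : R := derive1 (fun t => f s t) y.

Definition jac2 (F : R -> R -> R * R) (s y : R) : 'M[R]_2 :=
  \matrix_(i < 2, j < 2)
    (let fi := fun a b => if i == 0 :> nat then (F a b).1 else (F a b).2 in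
     if j == 0 :> nat then partial1 fi s y else partial2 fi s y).

Definition double_eigenvalue_one (A : 'M[R]_2) : Prop :=
  char_poly A = ('X - 1%:P) ^+ 2.

End Defs.

(* Main.v *)
Require Import Defs.
From HB Require Import structures.
From mathcomp Require Import all_boot all_order all_algebra.
From mathcomp Require Import all_classical all_reals all_analysis.
From mathcomp Require Import ring lra.
Import Order.TTheory GRing.Theory Num.Theory.
Local Open Scope ring_scope.


Lemma det2 (R : comNzRingType) (A : 'M[R]_2) : \det A = A 0 0 * A 1 1 - A 0 1 * A 1 0.
Proof.
rewrite (expand_det_row _ 0) !big_ord_recl big_ord0 /cofactor !det_mx11 !mxE /=.
rewrite addr0 expr0 mul1r expr1 /= mulN1r mulrN.
by congr (_ * A _ _ - _ * A _ _); try congr (A _ _); apply: val_inj.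
Qed.

Lemma charpoly2 (R : comNzRingType) (A : 'M[R]_2) :
  char_poly A = 'X^2 + (- (A 0 0 + A 1 1)) *: 'X + (A 0 0 * A 1 1 - A 0 1 * A 1 0)%:P.
Proof.
rewrite /char_poly det2 !mxE /= mulr1n mulr0n -mul_polyC polyCN polyCB polyCD polyCM; ring.
Qed.

Lemma poly2_eq (R : comNzRingType) (a b c d : R) :
  'X^2 + a *: 'X + b%:P = 'X^2 + c *: 'X + d%:P :> {poly R} -> a = c /\ b = d.
Proof.
move=> H; split.
  by move/(congr1 (fun p : {poly R} => p`_1)): H; rewrite !coefD !coefZ !coefX !coefXn !coefC /= !mulr1 !add0r !addr0.
by move/(congr1 (fun p : {poly R} => p`_0)): H; rewrite !coefD !coefZ !coefX !coefXn !coefC /= !mulr0 !add0r.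
Qed.

Lemma sq1 (R : comNzRingType) : ('X - 1%:P) ^+ 2 = 'X^2 + (-2) *: 'X + 1%:P :> {poly R}.
Proof. rewrite -mul_polyC polyCN. rewrite (_ : (2:R)%:P = 2%:R%:P) // polyC_natr. ring. Qed.


Lemma jacE (R : realType) (d K T g k w s y : R) : 0 < y ->
  jac2 (GT d K T g k w) s y =
  \matrix_(i < 2, j < 2)
    (if i == 0 :> nat then (if j == 0 :> nat then 1 else - (y^-1 / K))
     else (if j == 0 :> nat then g * (k * (cos (2 * w * s) * (2 * w))) else d * y `^ (d - 1))).
Proof.
move=> y0; apply/matrixP => i j; rewrite !mxE.
case: i => [[|[|i]] Hi] //=; case: j => [[|[|j]] Hj] //=; rewrite /partial1 /partial2 /GT /=.
- by rewrite derive1E derive_val !subr0.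
- have Hl := is_derive1_ln y0. rewrite derive1E derive_val scaler0 !add0r mul1r subr0; congr (- _); change (K^-1 * y^-1 = y^-1 / K); exact: mulrC.
- rewrite derive1E derive_val !add0r !mul1r. change (g * (k * (cos (2 * w * s) * ((2 * w) * 1)))= g * (k * (cos (2 * w * s) * (2 * w)))). by rewrite mulr1.
- have Hl := is_derive1_powR d y0. by rewrite derive1E derive_val addr0.
Qed.

Lemma fixE (R : realType) (d K T g k w s y : R) : 0 < y -> K != 0 ->
  GT d K T g k w s y = (s, y) ->
  ln y = - (K * T) /\ expR (d * ln y) + g * (1 + k * sin (2 * w * s)) = y.
Proof.
move=> y0 K0; rewrite /GT; case=> H1 H2; split.
  have H3 : ln y / K = - T by lra.
  by rewrite -(divfK K0 (ln y)) H3 mulrC mulrN.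
by rewrite -[in RHS]H2 /powR gt_eqF.
Qed.

Arguments fixE {R d K T g k w s y}.
Arguments poly2_eq {R a b c d}.

Theorem proposition10 (R : realType) (alpha beta omega gamma k1 : R)
  (halpha : 0 < alpha) (hbeta : beta < 0) (hab : `|beta| < alpha)
  (homega : 0 < omega) (hgamma : 0 < gamma) (hk1 : 0 < k1) :
  let delta := ((alpha - beta) / (alpha + beta)) ^+ 2 in
  let K := 2 * alpha / (alpha + beta) ^+ 2 in
  let M := delta `^ (1 - delta)^-1 - delta `^ (delta / (1 - delta)) in
  let TM := ln delta / (K * (delta - 1)) in
  ((gamma = M / (1 + k1) \/ gamma = M / (1 - k1)) ->
     forall s y : R, 0 < y ->
       GT delta K TM gamma k1 omega s y = (s, y) ->
       double_eigenvalue_one (jac2 (GT delta K TM gamma k1 omega) s y) /\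
       jac2 (GT delta K TM gamma k1 omega) s y != 1%:M)
  /\
  (forall T : R, 0 <= T -> forall s y : R, 0 < y ->
       GT delta K T gamma k1 omega s y = (s, y) ->
       double_eigenvalue_one (jac2 (GT delta K T gamma k1 omega) s y) ->
       (gamma = M / (1 + k1) \/ gamma = M / (1 - k1)) /\ T = TM).
Proof.
move=> delta K M TM.
have hb : `|beta| = - beta by rewrite ltr0_norm.
have hab0 : 0 < alpha + beta by lra.
have hq : 1 < (alpha - beta) / (alpha + beta) by rewrite ltr_pdivlMr // mul1r; lra.
have hd : 1 < delta.
  rewrite /delta expr2; set q := (alpha - beta) / (alpha + beta) in hq *; nra.
have hK : 0 < K by rewrite /K divr_gt0 // ?exprn_gt0 //; lra.
have hd0 : 0 < delta by lra.
have hlnd : 0 < ln delta by exact: ln_gt0.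
set L0 := ln delta / (1 - delta).
have hL0 : L0 < 0.
  have hi : (1 - delta)^-1 < 0 by rewrite invr_lt0; lra.
  rewrite /L0; nra.
have hME : M = expR L0 - expR (delta * L0).
  rewrite /M /powR gt_eqF // /L0; congr (expR _ - expR _); [exact: mulrC | ring].
have hM : 0 < M by rewrite hME subr_gt0 ltr_expR; nra.
have hTM : TM = - L0 / K.
  rewrite /TM /L0; field; rewrite !subr_eq0 gt_eqF // lt_eqF // gt_eqF //.
have hL0E : L0 = ln delta / (1 - delta) by [].
clearbody delta K M TM L0.
have K0 : K != 0 by apply: lt0r_neq0.
have d10 : 1 - delta != 0 by rewrite subr_eq0; apply/eqP => E; lra.
split.
- move=> hg s y y0 hfix.
  have [hL hF] := fixE y0 K0 hfix.
  have hLL : ln y = L0 by rewrite hL hTM mulrC divfK // opprK.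
  have hyE : y = expR L0 by rewrite -hLL lnK // posrE.
  have hd1 : delta * y `^ (delta - 1) = 1.
    rewrite /powR gt_eqF // hLL.
    have -> : (delta - 1) * L0 = - ln delta.
      rewrite hL0E; field; exact: d10.
    by rewrite expRN lnK ?posrE // mulfV // lt0r_neq0.
  set S := sin (2 * omega * s) in hF *.
  have hS : gamma * (1 + k1 * S) = M.
    move: hF; rewrite hLL hME -hyE => hF; lra.
  have hS2 : S ^+ 2 = 1.
    case: hg => hg.
    + have h1k : 1 + k1 != 0 by apply: lt0r_neq0; lra.
      have hg' : gamma * (1 + k1) = M by rewrite hg divfK.
      have E : gamma * k1 * (S - 1) = gamma * (1 + k1 * S) - gamma * (1 + k1) by ring.
      move: E; rewrite hS hg' subrr => /eqP; rewrite !mulf_eq0 subr_eq0.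
      rewrite (negbTE (lt0r_neq0 hgamma)) (negbTE (lt0r_neq0 hk1)) /= => /eqP ->.
      by rewrite expr1n.
    + have h1k : 1 - k1 != 0.
        apply/eqP => E; move: hg; rewrite E invr0 mulr0 => E'; lra.
      have hg' : gamma * (1 - k1) = M by rewrite hg divfK.
      have E : gamma * k1 * (S + 1) = gamma * (1 + k1 * S) - gamma * (1 - k1) by ring.
      move: E; rewrite hS hg' subrr => /eqP; rewrite !mulf_eq0 addr_eq0.
      rewrite (negbTE (lt0r_neq0 hgamma)) (negbTE (lt0r_neq0 hk1)) /= => /eqP ->.
      by rewrite sqrrN expr1n.
  have hcos : cos (2 * omega * s) = 0.
    by apply/eqP; rewrite -sqrf_eq0 cos2sin2 -/S hS2 subrr.
  split.
  + rewrite /double_eigenvalue_one jacE // charpoly2 sq1 !mxE /= hcos hd1.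
    congr ('X^2 + _ *: 'X + _%:P); ring.
  + rewrite jacE //; apply/eqP => /matrixP/(_ 0 1); rewrite !mxE /= => /eqP.
    rewrite oppr_eq0 mulf_eq0 !invr_eq0 (negbTE K0) (negbTE (lt0r_neq0 y0)).
    by [].
- move=> T hT s y y0 hfix hde.
  have [hL hF] := fixE y0 K0 hfix.
  move: hde; rewrite /double_eigenvalue_one jacE // charpoly2 sq1 !mxE /= => /poly2_eq [h1 h2].
  have hd1 : delta * y `^ (delta - 1) = 1 by lra.
  set c := gamma * (k1 * (cos (2 * omega * s) * (2 * omega))) in h2.
  have hc : (y^-1 / K) * c = 0.
    have E : (y^-1 / K) * c = 1 * (delta * y `^ (delta - 1)) - - (y^-1 / K) * c - 1 * (delta * y `^ (delta - 1)) by ring.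
    by rewrite E h2 hd1 mul1r subrr.
  have hcos : cos (2 * omega * s) = 0.
    move/eqP: hc; rewrite /c !mulf_eq0 !invr_eq0 (negbTE K0) (negbTE (lt0r_neq0 y0)).
    rewrite (negbTE (lt0r_neq0 hgamma)) (negbTE (lt0r_neq0 hk1)) /=.
    rewrite (negbTE (lt0r_neq0 homega)) pnatr_eq0 /= orbF.
    by move/eqP.
  have hLL : ln y = L0.
    move: hd1; rewrite /powR gt_eqF // => /(congr1 (@ln R)).
    rewrite lnM ?posrE ?expR_gt0 // expRK ln1 => hl.
    apply: (mulfI d10); rewrite hL0E [RHS]mulrC divfK //.
    have E : (1 - delta) * ln y = - ((delta - 1) * ln y) by ring.
    rewrite E; lra.
  have hyE : y = expR L0 by rewrite -hLL lnK // posrE.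
  set S := sin (2 * omega * s) in hF *.
  have hS : gamma * (1 + k1 * S) = M.
    move: hF; rewrite hLL hME -hyE => hF; lra.
  have hS2 : S ^+ 2 = 1 by rewrite /S sin2cos2 hcos expr0n /= subr0.
  split; last by rewrite hTM -hLL hL opprK mulrC mulKf.
  move/eqP: hS2; rewrite sqrf_eq1 => /orP [] /eqP hS1.
  + left; rewrite -hS hS1 mulr1 mulfK //; apply: lt0r_neq0; lra.
  + right; rewrite -hS hS1 mulrN1 mulfK //.
    apply/eqP => E; move: hS; rewrite hS1 mulrN1 E mulr0 => E'; lra.
Qed.
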